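(* Every strictly incoherent operation (SIO) acting on a single qutrit $\mathcal{H}_3$ admits a Kraus decomposition $\Phi(\rho)=\sum_{n=1}^N K_n\rho K_n^\dagger$ with at most $N=13$ strictly incoherent Kraus operators.
   Context: Fix an orthonormal basis $\{|i\rangle\}_{i=1}^d$ of $\mathcal{H}_d$. A state is incoherent if it is diagonal in this basis; let $\mathcal{I}$ denote the set of incoherent states. A Kraus operator $K$ is incoherent if $K\rho K^\dagger/\mathrm{Tr}[K\rho K^\dagger]\in\mathcal{I}$ for all $\rho\in\mathcal{I}$ with nonzero trace (equivalently, each column of $K$ has at most one nonzero entry). A completely positive trace-preserving map $\Phi$ is a strictly incoherent operation (SIO) if it has a Kraus representation $\Phi(\rho)=\sum_n K_n\rho K_n^\dagger$, $\sum_n K_n^\dagger K_n=I$, such that both every $K_n$ and every $K_n^\dagger$ are incoherent (equivalently, each row and each column of each $K_n$ has at most one nonzero entry); such $K_n$ are called strictly incoherent Kraus operators. *)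

(* Defs.v *)
From HB Require Import structures.
From mathcomp Require Import all_boot all_order all_algebra.
From mathcomp Require Import reals.
From mathcomp Require Import complex.
Set Implicit Arguments. Unset Strict Implicit. Unset Printing Implicit Defensive.
Import Order.TTheory GRing.Theory Num.Theory.
Local Open Scope ring_scope.

Definition dag (R : realType) (m n : nat) (A : 'M[R[i]]_(m, n)) : 'M[R[i]]_(n, m) :=
  (map_mx (@conjc R) A)^T.

Definition psd (R : realType) (d : nat) (A : 'M[R[i]]_d) : Prop :=
  forall v : 'cV[R[i]]_d, 0 <= (dag v *m A *m v) 0 0.

Definition is_state (R : realType) (d : nat) (rho : 'M[R[i]]_d) : Prop :=
  psd rho /\ \tr rho = 1.

Definition diagonal (R : realType) (d : nat) (A : 'M[R[i]]_d) : Prop :=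
  forall i j : 'I_d, i != j -> A i j = 0.

Definition incoherent_state (R : realType) (d : nat) (rho : 'M[R[i]]_d) : Prop :=
  is_state rho /\ diagonal rho.

Definition incoherent_kraus (R : realType) (d : nat) (K : 'M[R[i]]_d) : Prop :=
  forall rho : 'M[R[i]]_d, incoherent_state rho ->
    \tr (K *m rho *m dag K) != 0 ->
    incoherent_state ((\tr (K *m rho *m dag K))^-1 *: (K *m rho *m dag K)).

Definition strictly_incoherent_kraus (R : realType) (d : nat) (K : 'M[R[i]]_d) : Prop :=
  incoherent_kraus K /\ incoherent_kraus (dag K).

Definition SIO_kraus_rep (R : realType) (d N : nat)
    (Phi : 'M[R[i]]_d -> 'M[R[i]]_d) (K : 'I_N -> 'M[R[i]]_d) : Prop :=
  (forall n, strictly_incoherent_kraus (K n)) /\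
  \sum_(n < N) dag (K n) *m K n = 1%:M /\
  (forall rho : 'M[R[i]]_d, Phi rho = \sum_(n < N) K n *m rho *m dag (K n)).

Definition SIO (R : realType) (d : nat) (Phi : 'M[R[i]]_d -> 'M[R[i]]_d) : Prop :=
  exists N (K : 'I_N -> 'M[R[i]]_d), SIO_kraus_rep Phi K.

(* Main.v *)
Set Warnings "-notation-overridden,-ambiguous-paths,-notation-incompatible-prefix".
Require Import Defs.
From HB Require Import structures.
From mathcomp Require Import all_boot all_order all_algebra.
From mathcomp Require Import reals.
From mathcomp Require Import complex.
From mathcomp Require Import ring.
Import Order.TTheory GRing.Theory Num.Theory.
Local Open Scope ring_scope.
Set Implicit Arguments. Unset Strict Implicit. Unset Printing Implicit Defensive.
Lemma dagE (R : realType) m n (A : 'M[R[i]]_(m,n)) i j : dag A i j = (A j i)^*%C.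
Proof. by rewrite /dag !mxE. Qed.

Lemma dagM (R : realType) m n p (A : 'M[R[i]]_(m,n)) (B : 'M_(n,p)) :
  dag (A *m B) = dag B *m dag A.
Proof. by rewrite /dag map_mxM trmx_mul. Qed.

Lemma dagK (R : realType) m n (A : 'M[R[i]]_(m,n)) : dag (dag A) = A.
Proof. by apply/matrixP=> i j; rewrite !dagE conjcK. Qed.

Lemma dag_delta (R : realType) m n (i : 'I_m) (j : 'I_n) :
  dag (delta_mx i j : 'M[R[i]]_(m,n)) = delta_mx j i.
Proof.
apply/matrixP=> a b; rewrite dagE !mxE.
by rewrite conjc_nat andbC.
Qed.

Lemma quad_delta (R : realType) d (M : 'M[R[i]]_d) i :
  (dag (delta_mx i (0:'I_1) : 'cV[R[i]]_d) *m M *m delta_mx i (0:'I_1)) 0 0 = M i i.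
Proof. by rewrite dag_delta -rowE -colE !mxE. Qed.

Lemma psd_diag_ge0 (R : realType) d (M : 'M[R[i]]_d) i : psd M -> 0 <= M i i.
Proof. by move=> H; rewrite -quad_delta. Qed.

Lemma psd_tr_ge0 (R : realType) d (M : 'M[R[i]]_d) : psd M -> 0 <= \tr M.
Proof. by move=> H; rewrite /mxtrace; apply: sumr_ge0 => i _; apply: psd_diag_ge0. Qed.

Lemma psd_conj (R : realType) d (K rho : 'M[R[i]]_d) :
  psd rho -> psd (K *m rho *m dag K).
Proof.
move=> H v.
have -> : dag v *m (K *m rho *m dag K) *m v = dag (dag K *m v) *m rho *m (dag K *m v).
  by rewrite dagM dagK !mulmxA.
exact: H.
Qed.

Definition colprop (R : realType) (K : 'M[R[i]]_3) :=
  forall i j k : 'I_3, i != j -> K i k = 0 \/ K j k = 0.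

Lemma conj_entry (R : realType) d (K rho : 'M[R[i]]_d) i j :
  (K *m rho *m dag K) i j = \sum_l (\sum_k K i k * rho k l) * (K j l)^*%C.
Proof. by rewrite !mxE; apply: eq_bigr => l _; rewrite dagE mxE. Qed.
Lemma colprop_incoh (R : realType) (K : 'M[R[i]]_3) : colprop K -> incoherent_kraus K.
Proof.
move=> HK rho [[Hpsd Htr] Hdiag] Ht.
set M := K *m rho *m dag K in Ht *.
have Mpsd : psd M by apply: psd_conj.
have t0 : 0 < \tr M by rewrite lt_def Ht psd_tr_ge0.
split; [split|].
- move=> v; rewrite -scalemxAr -scalemxAl mxE.
  by apply: mulr_ge0; [rewrite invr_ge0 ltW | apply: Mpsd].
- by rewrite mxtraceZ mulVf.
- move=> i j ij; rewrite mxE /M conj_entry.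
  rewrite big1 ?mulr0 // => l _.
  rewrite (bigD1 l) //= big1 ?addr0; last first.
    by move=> k kl; rewrite Hdiag ?mulr0 // eq_sym.
  by case: (HK i j l ij) => ->; rewrite ?conjc0 ?mul0r ?mulr0.
Qed.

Lemma delta_state (R : realType) (k : 'I_3) :
  incoherent_state (delta_mx k k : 'M[R[i]]_3).
Proof.
split; [split|].
- move=> v.
  rewrite -(mul_delta_mx (0:'I_1)) -dag_delta !mulmxA -mulmxA -dagM.
  rewrite mxE big_ord1 dagE mulrC; exact: mulcJ_ge0.
- rewrite /mxtrace (bigD1 k) //= big1 ?addr0; first by rewrite mxE !eqxx.
  by move=> a ak; rewrite mxE (negbTE ak).
- move=> a b ab; rewrite mxE; case: eqP => [ka|] //=; case: eqP => [kb|] //=.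
  by move: ab; rewrite ka kb eqxx.
Qed.

Lemma incoh_colprop (R : realType) (K : 'M[R[i]]_3) : incoherent_kraus K -> colprop K.
Proof.
move=> HK i j k ij.
have HM : K *m delta_mx k k *m dag K = col k K *m dag (col k K).
  by rewrite colE dagM dag_delta !mulmxA; congr (_ *m _); rewrite -mulmxA mul_delta_mx.
have Me : forall a b, (K *m delta_mx k k *m dag K) a b = K a k * (K b k)^*%C.
  by move=> a b; rewrite HM mxE big_ord1 dagE !mxE.
have Ht : \tr (K *m delta_mx k k *m dag K) = \sum_a K a k * (K a k)^*%C.
  by apply: eq_bigr => a _; rewrite Me.
have [t0|tn0] := eqVneq (\tr (K *m delta_mx k k *m dag K)) 0.
  left; move: t0; rewrite Ht => t0.
  have := @psumr_eq0P _ _ xpredT (fun a => K a k * (K a k)^*%C) (fun a _ => mulcJ_ge0 (K a k)) t0 i isT => /eqP.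
  by rewrite mulf_eq0 conjc_eq0 orbb => /eqP.
have [_ Hd] := HK _ (delta_state R k) tn0.
have := Hd i j ij; rewrite mxE Me => /eqP.
rewrite !mulf_eq0 invr_eq0 (negbTE tn0) conjc_eq0 /=.
by case/orP => /eqP; [left|right].
Qed.
Definition o0 : 'I_3 := @Ordinal 3 0 isT.
Definition o1 : 'I_3 := @Ordinal 3 1 isT.
Definition o2 : 'I_3 := @Ordinal 3 2 isT.
Definition ords := [:: o0; o1; o2].
Lemma mem_ords (b : 'I_3) : b \in ords.
Proof. (by case: b => [[|[|[|n]]] Hn]). Qed.
Definition opts : seq (option 'I_3) := [:: None; Some o0; Some o1; Some o2].
Lemma opts_all r : r \in opts.
Proof. case: r => [b|]; last by []. have := mem_ords b. by rewrite !inE. Qed.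
Definition tbl : seq (seq 'I_3) := [:: [::o0;o1;o2]; [::o0;o2;o1]; [::o1;o2;o0]; [::o2;o1;o0]; [::o2;o0;o1]; [::o1;o0;o2]].
Definition qs (m : nat) (j : 'I_3) : 'I_3 := nth o0 (nth [::o1;o0;o2] tbl m) j.
Definition aa (m : nat) : 'I_3 := nth o0 [::o0;o1;o2;o0;o1] m.
Definition rf (r0 r1 r2 : option 'I_3) (b : 'I_3) := nth None [:: r0; r1; r2] b.
Definition okb r0 r1 r2 :=
  all (fun b1 => all (fun b2 => all (fun a => ((rf r0 r1 r2 b1 == Some a) && (rf r0 r1 r2 b2 == Some a)) ==> (b1 == b2)) ords) ords) ords.
Definition compat (m : nat) r0 r1 r2 :=
  all (fun b => all (fun a => (rf r0 r1 r2 b == Some a) ==> (a == qs m b)) ords) ords.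
Lemma fin_check : all (fun r0 => all (fun r1 => all (fun r2 => okb r0 r1 r2 ==> has (fun m => compat m r0 r1 r2) (iota 0 6)) opts) opts) opts.
Proof. vm_compute. reflexivity. Qed.
Lemma inj_check : all (fun m => all (fun x => all (fun y => (qs m x == qs m y) ==> (x == y)) ords) ords) (iota 0 6).
Proof. vm_compute. reflexivity. Qed.
Lemma agree_check : all (fun m => qs m.+1 (aa m) == qs m (aa m)) (iota 0 5).
Proof. vm_compute. reflexivity. Qed.

Definition supp (R : realType) (q : 'I_3 -> 'I_3) (K : 'M[R[i]]_3) :=
  forall a b, K a b != 0 -> a = q b.

Lemma rfE (r : 'I_3 -> option 'I_3) b : rf (r o0) (r o1) (r o2) b = r b.
Proof. by have := mem_ords b; rewrite !inE => /or3P [] /eqP ->. Qed.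

Lemma exists_perm (R : realType) (K : 'M[R[i]]_3) :
  colprop K -> colprop (dag K) -> exists2 m, (m < 6)%N & supp (qs m) K.
Proof.
move=> HK HdK.
pose r b := [pick a | K a b != 0].
have Hr2 : forall a b, r b = Some a -> K a b != 0.
  by move=> a b; rewrite /r; case: pickP => // a' Ha' [<-].
have Hr : forall a b, K a b != 0 -> r b = Some a.
  move=> a b Kab; rewrite /r; case: pickP => [a' Ha'|H]; last by move: (H a); rewrite Kab.
  congr Some; apply/eqP; apply/negPn/negP => ne.
  by case: (HK a' a b ne) => /eqP; rewrite ?(negbTE Ha') ?(negbTE Kab).
move: fin_check => /allP/(_ _ (opts_all (r o0)))/allP/(_ _ (opts_all (r o1))).
move=> /allP/(_ _ (opts_all (r o2)))/implyP H.
have ok : okb (r o0) (r o1) (r o2).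
  apply/allP => b1 _; apply/allP => b2 _; apply/allP => a _; apply/implyP.
  rewrite !rfE => /andP[/eqP h1 /eqP h2].
  apply/negPn/negP => ne.
  have := Hr2 _ _ h1; have := Hr2 _ _ h2.
  move=> nz2 nz1; case: (HdK b1 b2 a ne); rewrite dagE => /eqP; rewrite conjc_eq0 => /eqP e.
    by rewrite e eqxx in nz1.
  by rewrite e eqxx in nz2.
case/hasP: (H ok) => m; rewrite mem_iota => /andP[_ m6] Hc; exists m => //.
move=> a b Kab; move/allP: Hc => /(_ b (mem_ords b))/allP/(_ a (mem_ords a))/implyP.
by rewrite rfE (Hr a b Kab) eqxx => /(_ isT)/eqP.
Qed.

Definition mkop (R : realType) (q : 'I_3 -> 'I_3) (w : 'I_3 -> R[i]) : 'M[R[i]]_3 :=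
  \matrix_(a, b) if a == q b then w b else 0.

Definition vec_of (R : realType) (q : 'I_3 -> 'I_3) (K : 'M[R[i]]_3) : 'I_3 -> R[i] :=
  fun b => K (q b) b.

Lemma supp_mkop (R : realType) q (K : 'M[R[i]]_3) : supp q K -> K = mkop q (vec_of q K).
Proof.
move=> H; apply/matrixP => a b; rewrite mxE /vec_of.
case: eqP => [->//|ne]; apply/eqP/negPn/negP => Kab; exact: ne (H _ _ Kab).
Qed.

Lemma mkop_SI (R : realType) q (w : 'I_3 -> R[i]) : injective q -> strictly_incoherent_kraus (mkop q w).
Proof.
move=> qi; split; apply: colprop_incoh.
- move=> i j k ij; rewrite !mxE; case: (i =P q k) => [ik|]; last by left.
  by right; case: eqP => // jk; move: ij; rewrite ik jk eqxx.
- move=> i j k ij; rewrite !dagE !mxE; case: (k =P q i) => [ki|]; last by left; rewrite conjc0.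
  right; case: eqP => [kj|]; last by rewrite conjc0.
  by move: ij; rewrite (qi i j) ?eqxx // -ki -kj.
Qed.

Lemma qs_big n j : (5 <= n)%N -> qs n j = qs 5 j.
Proof. by rewrite /qs; case: n => [|[|[|[|[|[|n]]]]]] //=; rewrite nth_nil. Qed.

Lemma qs_inj m : injective (qs m).
Proof.
have H5 : forall x y, qs 5 x = qs 5 y -> x = y.
  move=> x y; move: inj_check => /allP/(_ 5%N isT)/allP/(_ x (mem_ords x))/allP/(_ y (mem_ords y)).
  by move/implyP => H /eqP/H/eqP.
move=> x y; case: (ltnP m 5) => [m5|m5]; last by rewrite !qs_big //; exact: H5.
have hm : m \in iota 0 6 by rewrite mem_iota add0n (ltn_trans m5).
move: inj_check => /allP/(_ m hm)/allP/(_ x (mem_ords x))/allP/(_ y (mem_ords y)).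
by move/implyP => H /eqP/H/eqP.
Qed.

Lemma qs_agree m : qs m.+1 (aa m) = qs m (aa m).
Proof.
case: (ltnP m 5) => [m5|m5]; last by rewrite !qs_big // ltnW.
have hm : m \in iota 0 5 by rewrite mem_iota add0n m5.
by move: agree_check => /allP/(_ m hm)/eqP.
Qed.
Definition gram (R : realType) (s : seq {ffun 'I_3 -> R[i]}) (k l : 'I_3) : R[i] :=
  \sum_(x <- s) x k * (x l)^*%C.

Lemma gram_conj (R : realType) (s : seq {ffun 'I_3 -> R[i]}) k l :
  gram s l k = (gram s k l)^*%C.
Proof. rewrite /gram rmorph_sum; apply: eq_bigr => x _; by rewrite rmorphM /= conjcK mulrC. Qed.

Lemma conjcM (R : realType) (x y : R[i]) : (x * y)^*%C = x^*%C * y^*%C.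
Proof. exact: rmorphM. Qed.
Lemma conjcB (R : realType) (x y : R[i]) : (x - y)^*%C = x^*%C - y^*%C.
Proof. exact: rmorphB. Qed.

Lemma gs_step (R : realType) (s : seq {ffun 'I_3 -> R[i]}) (b : 'I_3) :
  exists (w : {ffun 'I_3 -> R[i]}) (s' : seq {ffun 'I_3 -> R[i]}),
    [/\ forall k l, gram s k l = w k * (w l)^*%C + gram s' k l,
        forall x, x \in s' -> x b = 0 &
        forall j, (forall x, x \in s -> x j = 0) -> w j = 0 /\ (forall x, x \in s' -> x j = 0)].
Proof.
have sge0 : 0 <= gram s b b by apply: sumr_ge0 => x _; exact: mulcJ_ge0.
have [s0|sn0] := eqVneq (gram s b b) 0.
  exists [ffun=> 0], s; split.
  - by move=> k l; rewrite ffunE mul0r add0r.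
  - move=> x xs; move: s0 => /eqP; rewrite psumr_eq0; last by move=> y _; exact: mulcJ_ge0.
    move=> /allP/(_ x xs) /=; rewrite mulf_eq0 conjc_eq0 orbb => /eqP //.
  - by move=> j H; split => //; rewrite ffunE.
have [r sr] : exists r : R, gram s b b = (r%:C)%C.
  by apply/complex_realP; apply: ger0_real.
have r0 : 0 <= r by rewrite -ler0c -sr.
pose sq : R[i] := ((Num.sqrt r)%:C)%C.
have sqsq : sq * sq = gram s b b by rewrite sr /sq -rmorphM -expr2 sqr_sqrtr.
have sqJ : sq^*%C = sq by rewrite /sq conjc_real.
have sqn0 : sq != 0 by apply: contraNneq sn0 => e; rewrite -sqsq e mul0r.
clearbody sq.
pose w := [ffun k => gram s k b / sq].
pose f (x : {ffun 'I_3 -> R[i]}) := [ffun k => x k - w k * (x b / sq)].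
exists w, (map f s); split.
- move=> k l.
  rewrite /gram big_map.
  have e : forall x : {ffun 'I_3 -> R[i]}, f x k * (f x l)^*%C =
     x k * (x l)^*%C - ((w l)^*%C / sq) * (x k * (x b)^*%C) - (w k / sq) * (x b * (x l)^*%C)
       + (w k * (w l)^*%C / (sq * sq)) * (x b * (x b)^*%C).
    move=> x; rewrite !ffunE !(conjcB, conjcM) conjc_inv sqJ.
    by field.
  rewrite (eq_bigr _ (fun x _ => e x)).
  rewrite big_split /= !sumrB -!mulr_sumr.
  have e1 : \sum_(x <- s) x k * (x b)^*%C = w k * sq.
    by rewrite /w ffunE mulfVK.
  have e2 : \sum_(x <- s) x b * (x l)^*%C = (w l)^*%C * sq.
    have := gram_conj s l b; rewrite /gram => ->.
    by rewrite /w ffunE conjcM conjc_inv sqJ mulfVK.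
  rewrite e1 e2 -/(gram s b b) -sqsq /gram.
  by field.
- move=> x /mapP [y ys ->]; rewrite ffunE /w ffunE -sqsq.
  by field.
- move=> j H; split.
  + by rewrite /w ffunE /gram big1_seq ?mul0r // => x /andP[_ xs]; rewrite H // mul0r.
  + move=> x /mapP [y ys ->]; rewrite ffunE H // /w ffunE /gram big1_seq ?mul0r ?subr0 //.
    by move=> z /andP[_ zs]; rewrite H // mul0r.
Qed.

Lemma gs3 (R : realType) (s : seq {ffun 'I_3 -> R[i]}) (a b c : 'I_3) :
  b != a -> c != a -> (forall j : 'I_3, [|| j == a, j == b | j == c]) ->
  exists w1 w2 w3 : {ffun 'I_3 -> R[i]},
    (forall j, j != a -> w3 j = 0) /\
    forall k l, gram s k l = w1 k * (w1 l)^*%C + w2 k * (w2 l)^*%C + w3 k * (w3 l)^*%C.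
Proof.
move=> ba ca Hall.
have [w1 [s1 [E1 Z1 _]]] := gs_step s b.
have [w2 [s2 [E2 Z2 P2]]] := gs_step s1 c.
have [w3 [s3 [E3 Z3 P3]]] := gs_step s2 a.
have Z2b : forall x, x \in s2 -> x b = 0 by case: (P2 b Z1).
have [w3b Z3b] := P3 b Z2b.
have [w3c Z3c] := P3 c Z2.
exists w1, w2, w3; split.
  by move=> j ja; have := Hall j; rewrite (negbTE ja) /= => /orP [] /eqP ->.
move=> k l; rewrite E1 E2 E3 !addrA.
have -> : gram s3 k l = 0.
  rewrite /gram big1_seq // => x /andP[_ xs].
  have xz : forall j, x j = 0.
    by move=> j; have := Hall j => /or3P [] /eqP ->; [apply: Z3|apply: Z3b|apply: Z3c].
  by rewrite xz mul0r.
by rewrite addr0.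
Qed.

Definition contrib (R : realType) (q : 'I_3 -> 'I_3) (s : seq {ffun 'I_3 -> R[i]})
  (rho : 'M[R[i]]_3) : 'M[R[i]]_3 :=
  \sum_(x <- s) mkop q x *m rho *m dag (mkop q x).

Lemma contrib_entry (R : realType) q (s : seq {ffun 'I_3 -> R[i]}) rho i j :
  contrib q s rho i j =
  \sum_l \sum_k (((i == q k)%:R * (j == q l)%:R * rho k l) * gram s k l).
Proof.
rewrite /contrib summxE.
have e : forall x : {ffun 'I_3 -> R[i]}, (mkop q x *m rho *m dag (mkop q x)) i j =
   \sum_l \sum_k (((i == q k)%:R * (j == q l)%:R * rho k l) * (x k * (x l)^*%C)).
  move=> x; rewrite conj_entry; apply: eq_bigr => l _; rewrite mulr_suml.
  apply: eq_bigr => k _; rewrite !mxE.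
  rewrite (fun_if (@conjc R)) conjc0.
  case: (i =P q k) => _; case: (j =P q l) => _; rewrite /= ?mulr0n ?mulr1n; do ?rewrite mul0r; do ?rewrite mulr0; do ?rewrite mul1r; [by rewrite [RHS]mulrCA [RHS]mulrA|by rewrite !mul0r|by []|by []].
rewrite (eq_bigr _ (fun x _ => e x)) exchange_big; apply: eq_bigr => l _.
rewrite exchange_big; apply: eq_bigr => k _; by rewrite /gram mulr_sumr.
Qed.

Lemma contrib_gram (R : realType) q (s t : seq {ffun 'I_3 -> R[i]}) rho :
  (forall k l, gram s k l = gram t k l) -> contrib q s rho = contrib q t rho.
Proof.
move=> H; apply/matrixP => i j; rewrite !contrib_entry.
by apply: eq_bigr => l _; apply: eq_bigr => k _; rewrite H.
Qed.

Lemma gram_cons (R : realType) (x : {ffun 'I_3 -> R[i]}) s k l :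
  gram (x :: s) k l = x k * (x l)^*%C + gram s k l.
Proof. by rewrite /gram big_cons. Qed.

Lemma gram_nil (R : realType) k l : gram ([::] : seq {ffun 'I_3 -> R[i]}) k l = 0.
Proof. by rewrite /gram big_nil. Qed.

Lemma tr_delta (R : realType) (M : 'M[R[i]]_3) a b : \tr (M *m delta_mx b a) = M a b.
Proof.
rewrite -(mul_delta_mx (0:'I_1)) mulmxA -colE mxtrace_mulC -rowE.
by rewrite /mxtrace big_ord1 !mxE.
Qed.

Lemma chan_tr (R : realType) (p : nat) (A : 'I_p -> 'M[R[i]]_3) (s : seq 'M[R[i]]_3) :
  (forall rho, \sum_(n < p) A n *m rho *m dag (A n) = \sum_(W <- s) W *m rho *m dag W) ->
  \sum_(n < p) dag (A n) *m A n = \sum_(W <- s) dag W *m W.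
Proof.
move=> H; apply/matrixP => a b; rewrite !summxE.
have key : forall W : 'M[R[i]]_3, (dag W *m W) a b = \tr (W *m delta_mx b a *m dag W).
  by move=> W; rewrite mxtrace_mulC mulmxA tr_delta.
rewrite (eq_bigr _ (fun n _ => key (A n))) (eq_bigr _ (fun W _ => key W)).
by rewrite -!raddf_sum H.
Qed.

Lemma others (a : 'I_3) : exists b c : 'I_3,
  [/\ b != a, c != a & forall j : 'I_3, [|| j == a, j == b | j == c]].
Proof.
have := mem_ords a; rewrite !inE => /or3P [] /eqP ->.
- by exists o1, o2; split => // j; have := mem_ords j; rewrite !inE => /or3P [] /eqP ->.
- by exists o0, o2; split => // j; have := mem_ords j; rewrite !inE => /or3P [] /eqP ->.
- by exists o0, o1; split => // j; have := mem_ords j; rewrite !inE => /or3P [] /eqP ->.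
Qed.

Lemma mkop_agree (R : realType) (q q' : 'I_3 -> 'I_3) (w : 'I_3 -> R[i]) a :
  (forall j, j != a -> w j = 0) -> q a = q' a -> mkop q w = mkop q' w.
Proof.
move=> hw hq; apply/matrixP => i j; rewrite !mxE.
have [->|ja] := eqVneq j a; first by rewrite hq.
by rewrite hw //; case: ifP; case: ifP.
Qed.

Lemma supp_mkop_ff (R : realType) q (K : 'M[R[i]]_3) :
  supp q K -> mkop q [ffun b => K (q b) b] = K.
Proof.
move=> H; rewrite {2}(supp_mkop H); apply/matrixP => a b; by rewrite !mxE ffunE.
Qed.

Definition suppb (R : realType) (q : 'I_3 -> 'I_3) (K : 'M[R[i]]_3) :=
  [forall a, forall b, (K a b != 0) ==> (a == q b)].

Lemma suppbP (R : realType) q (K : 'M[R[i]]_3) : suppb q K <-> supp q K.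
Proof.
split.
- by move=> /forallP H a b nz; move: (H a) => /forallP/(_ b)/implyP/(_ nz)/eqP.
- by move=> H; apply/forallP => a; apply/forallP => b; apply/implyP => nz; rewrite (H a b nz).
Qed.

Lemma contrib_cat (R : realType) q (s t : seq {ffun 'I_3 -> R[i]}) rho :
  contrib q (s ++ t) rho = contrib q s rho + contrib q t rho.
Proof. by rewrite /contrib big_cat. Qed.

Unset Implicit Arguments.
Set Strict Implicit.

Theorem theorem2 (R : realType) (Phi : 'M[R[i]]_3 -> 'M[R[i]]_3) :
  SIO Phi ->
  exists (N : nat) (K : 'I_N -> 'M[R[i]]_3), (N <= 13)%N /\ SIO_kraus_rep Phi K.
Proof.
move=> [N0 [K0 [HSI [Htr Hphi]]]].
have Hex : forall n : 'I_N0, exists m, suppb (qs m) (K0 n) && (m < 6)%N.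
  move=> n; have [HK1 HK2] := HSI n.
  have [m m6 Hm] := exists_perm (incoh_colprop HK1) (incoh_colprop HK2).
  by exists m; rewrite m6 andbT; apply/suppbP.
pose idx n := ex_minn (Hex n).
have Hidx : forall n, supp (qs (idx n)) (K0 n) /\ (idx n < 6)%N.
  move=> n; rewrite /idx; case: ex_minnP => m /andP[H1 H2] _; split => //; exact/suppbP.
pose S (m : nat) := [seq [ffun b => K0 n (qs m b) b] | n <- enum 'I_N0 & idx n == m].
have regroup : forall rho, \sum_(n < N0) K0 n *m rho *m dag (K0 n) =
    \sum_(m < 6) contrib (qs m) (S m) rho.
  move=> rho.
  pose idx' n : 'I_6 := Ordinal (proj2 (Hidx n)).
  rewrite (partition_big idx' xpredT) //; apply: eq_bigr => m _.
  rewrite /contrib /S big_map big_filter big_enum_cond /=.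
  apply: eq_big => [n|n /eqP hn]; first by rewrite /idx'.
  by rewrite supp_mkop_ff //; rewrite -hn; exact: (proj1 (Hidx n)).
have chain : forall m, exists L : seq 'M[R[i]]_3,
    [/\ size L = (2 * m)%N, (forall W, W \in L -> strictly_incoherent_kraus W) &
    exists r : {ffun 'I_3 -> R[i]}, forall rho,
      \sum_(k < m) contrib (qs k) (S k) rho =
      \sum_(W <- L) W *m rho *m dag W + contrib (qs m) [:: r] rho].
  elim=> [|m [L [sL siL [r Hr]]]].
    exists [::]; split => //; exists [ffun=> 0] => rho.
    rewrite big_ord0 big_nil add0r (@contrib_gram _ _ _ [::]); first by rewrite /contrib big_nil.
    by move=> k l; rewrite gram_cons gram_nil ffunE mul0r addr0.
  have [b [c [ba ca Hall]]] := others (aa m).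
  have [w1 [w2 [w3 [hw3 hg]]]] := gs3 (r :: S m) ba ca Hall.
  exists (L ++ [:: mkop (qs m) w1; mkop (qs m) w2]); split.
  - by rewrite size_cat sL /= mulnS addnC.
  - move=> W; rewrite mem_cat => /orP [/siL //|]; rewrite !inE => /orP [] /eqP ->;
      apply: mkop_SI; exact: qs_inj.
  - exists w3 => rho.
    rewrite big_ord_recr /= Hr big_cat /= !big_cons big_nil addr0 -!addrA; congr (_ + _).
    have E : contrib (qs m) [:: r] rho + contrib (qs m) (S m) rho =
             contrib (qs m) [:: w1; w2; w3] rho.
      rewrite -contrib_cat /=; apply: contrib_gram => k l.
      by rewrite hg !gram_cons gram_nil addr0 !addrA.
    rewrite addrA E /contrib !big_cons big_nil !addr0 !addrA.
    by rewrite (@mkop_agree _ (qs m) (qs m.+1) w3 (aa m) hw3 (esym (qs_agree m))) big_nil addr0.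
have [L [sL siL [r Hr]]] := chain 6%N.
pose Lf := L ++ [:: mkop (qs 6) r].
have sLf : size Lf = 13%N by rewrite size_cat sL.
have chanEq : forall rho, \sum_(n < N0) K0 n *m rho *m dag (K0 n) =
    \sum_(W <- Lf) W *m rho *m dag W.
  move=> rho; rewrite regroup Hr /Lf big_cat /= /contrib !big_cons !big_nil.
  by [].
exists (size Lf), (fun j => nth 0 Lf j); split; first by rewrite sLf.
split; [|split].
- move=> j; have : nth 0 Lf j \in Lf by apply: mem_nth.
  rewrite mem_cat => /orP [/siL //|]; rewrite inE => /eqP ->; apply: mkop_SI; exact: qs_inj.
- rewrite -Htr (chan_tr chanEq) (big_nth 0) big_mkord.
  by [].
- move=> rho; rewrite Hphi chanEq (big_nth 0) big_mkord.
  by [].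
Qed.
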